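(* Fix a constant $\epsilon>0$. There exists a constant $A>0$ (depending only on $\epsilon$) such that for all integers $1 \le k \le d$, the Local Search algorithm with parameter $\epsilon$ (defined in the context), viewed as a map $c$ sending each finite point set $P\subset\mathbb{R}^d$ to its output $c(P)$, is an $(Ak)^{2k}$-composable core-set of size $k$ for the determinant maximization problem with parameter $k$. That is, $|c(P)|\le k$ for every $P$, and for every integer $m\ge1$ and all finite point sets $P_1,\dots,P_m\subset\mathbb{R}^d$, $$\mathrm{MAXDET}_k\Big(\bigcup_{i=1}^m c(P_i)\Big)\ge \frac{1}{(Ak)^{2k}}\,\mathrm{MAXDET}_k\Big(\bigcup_{i=1}^m P_i\Big).$$
   Context: For a finite set $S\subset\mathbb{R}^d$ with $|S|=j$, $\mathrm{VOL}(S)$ denotes the $j$-dimensional volume of the parallelepiped spanned by the vectors of $S$; if $M_S$ is the $j\times d$ matrix whose rows are the points of $S$, then $\det(M_SM_S^\top)=\mathrm{VOL}(S)^2$. For finite $P\subset\mathbb{R}^d$, $\mathrm{MAXDET}_k(P)=\max_{S\subseteq P,\,|S|=k}\det(M_SM_S^\top)$. For a set $\mathcal{C}$ and points $p,q$, $\mathcal{C}+q-p$ denotes $(\mathcal{C}\setminus\{p\})\cup\{q\}$. The Local Search algorithm on input $P$, $k$, $\epsilon$: initialize $\mathcal{C}=\emptyset$; for $i=1,\dots,k$ add to $\mathcal{C}$ a point $\arg\max_{p\in P\setminus\mathcal{C}}\mathrm{VOL}(\mathcal{C}\cup\{p\})$; then repeat: if there are $q\in P\setminus\mathcal{C}$ and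 $p\in\mathcal{C}$ with $\mathrm{VOL}(\mathcal{C}+q-p)\ge(1+\epsilon)\mathrm{VOL}(\mathcal{C})$, replace $p$ by $q$; until no such pair exists; output $\mathcal{C}$. A map $c$ from point sets to subsets of themselves is an $\alpha$-composable core-set for determinant maximization if the displayed inequality (with $\alpha$ in place of $(Ak)^{2k}$) holds for every collection $P_1,\dots,P_m$; it has size $t$ if $|c(P)|\le t$ for all $P$. *)

(* Defs.v *)
From HB Require Import structures.
From mathcomp Require Import all_boot all_order all_algebra.
From mathcomp Require Import finmap.
From mathcomp Require Import reals.
Set Implicit Arguments. Unset Strict Implicit. Unset Printing Implicit Defensive.
Import Order.TTheory GRing.Theory Num.Theory.
Local Open Scope ring_scope.
Local Open Scope fset_scope.

Section Defs.
Variables (R : realType) (d : nat).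
Notation pt := 'rV[R]_d.

(* M_S : the |S| x d matrix whose rows are the points of S (in some order;
   det (M_S M_S^T) does not depend on the order). *)
Definition mat_of (S : {fset pt}) : 'M[R]_(size (enum_fset S), d) :=
  \matrix_(i < size (enum_fset S), j < d) (nth 0 (enum_fset S) i) 0 j.

Definition gramdet (S : {fset pt}) : R :=
  \det (mat_of S *m (mat_of S)^T).

Definition VOL (S : {fset pt}) : R := Num.sqrt (gramdet S).

(* MAXDET_k(P) = max over k-subsets S of P of det(M_S M_S^T)
   (0 if P has fewer than k points; all Gram determinants are >= 0). *)
Definition MAXDET (k : nat) (P : {fset pt}) : R :=
  \big[Num.max/0]_(S <- fpowerset P | #|` S| == k) gramdet S.

Definition swap (C : {fset pt}) (q p : pt) : {fset pt} := q |` (C `\ p).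

Definition greedy_step (P C C' : {fset pt}) : Prop :=
  (exists2 p, p \in P `\` C &
     C' = p |` C /\ forall q, q \in P `\` C -> VOL (q |` C) <= VOL (p |` C))
  \/ (P `\` C = fset0 /\ C' = C).

Fixpoint greedy_reach (P : {fset pt}) (n : nat) (C : {fset pt}) : Prop :=
  match n with
  | 0 => C = fset0
  | n'.+1 => exists C0, greedy_reach P n' C0 /\ greedy_step P C0 C
  end.

Definition swap_step (eps : R) (P C C' : {fset pt}) : Prop :=
  exists q p, [/\ q \in P `\` C, p \in C, C' = swap C q p &
                  VOL (swap C q p) >= (1 + eps) * VOL C].

Inductive swap_reach (eps : R) (P : {fset pt}) : {fset pt} -> {fset pt} -> Prop :=
  | swap_refl C : swap_reach eps P C C
  | swap_next C1 C2 C3 : swap_step eps P C1 C2 -> swap_reach eps P C2 C3 ->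
                         swap_reach eps P C1 C3.

(* C is a possible output of Local Search on input P, k, eps
   (for some resolution of ties in the argmax and in the choice of swaps). *)
Definition LS_output (eps : R) (k : nat) (P C : {fset pt}) : Prop :=
  exists2 C0, greedy_reach P k C0 &
    swap_reach eps P C0 C /\
    (forall q p, q \in P `\` C -> p \in C -> VOL (swap C q p) < (1 + eps) * VOL C).

End Defs.

(* Main.v *)
Require Import Defs.
From HB Require Import structures.
From mathcomp Require Import all_boot all_order all_algebra.
From mathcomp Require Import finmap.
From mathcomp Require Import reals.
From mathcomp Require Import ring lra.
From mathcomp Require Import perm.
Set Implicit Arguments. Unset Strict Implicit. Unset Printing Implicit Defensive.
Import Order.TTheory GRing.Theory Num.Theory.
Local Open Scope ring_scope.

Section Gram.
Variables (R : realType) (d : nat).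
Notation pt := 'rV[R]_d.

Definition dot (u v : pt) : R := (u *m v^T) 0 0.
Definition nrm2 (u : pt) : R := dot u u.

Lemma dotE u v : dot u v = \sum_j u 0 j * v 0 j.
Proof. by rewrite /dot mxE; apply: eq_bigr => j _; rewrite mxE. Qed.

Lemma dotC u v : dot u v = dot v u.
Proof. by rewrite !dotE; apply: eq_bigr => j _; rewrite mulrC. Qed.

Lemma dotDl u v w : dot (u + v) w = dot u w + dot v w.
Proof. by rewrite !dotE -big_split; apply: eq_bigr => j _; rewrite mxE mulrDl. Qed.

Lemma dotZl a u w : dot (a *: u) w = a * dot u w.
Proof. by rewrite !dotE mulr_sumr; apply: eq_bigr => j _; rewrite mxE mulrA. Qed.

Lemma dotNl u w : dot (- u) w = - dot u w.
Proof. by rewrite -scaleN1r dotZl mulN1r. Qed.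

Lemma dotDr u v w : dot w (u + v) = dot w u + dot w v.
Proof. by rewrite dotC dotDl !(dotC w). Qed.

Lemma dotZr a u w : dot w (a *: u) = a * dot w u.
Proof. by rewrite dotC dotZl dotC. Qed.

Lemma dotNr u w : dot w (- u) = - dot w u.
Proof. by rewrite dotC dotNl dotC. Qed.

Lemma dot0l w : dot 0 w = 0.
Proof. by rewrite dotE big1 // => j _; rewrite mxE mul0r. Qed.

Lemma dot0r w : dot w 0 = 0.
Proof. by rewrite dotC dot0l. Qed.

Lemma dot_suml I (r : seq I) (P : pred I) (F : I -> pt) w :
  dot (\sum_(i <- r | P i) F i) w = \sum_(i <- r | P i) dot (F i) w.
Proof.
elim/big_rec2: _ => [|i y1 y2 _ <-]; first by rewrite dot0l.
by rewrite dotDl.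
Qed.

Lemma dot_sumr I (r : seq I) (P : pred I) (F : I -> pt) w :
  dot w (\sum_(i <- r | P i) F i) = \sum_(i <- r | P i) dot w (F i).
Proof. by rewrite dotC dot_suml; apply: eq_bigr => i _; rewrite dotC. Qed.

Lemma nrm2_ge0 u : 0 <= nrm2 u.
Proof. by rewrite /nrm2 dotE sumr_ge0 // => j _; rewrite -expr2 sqr_ge0. Qed.

Lemma nrm2_eq0 u : nrm2 u = 0 -> u = 0.
Proof.
rewrite /nrm2 dotE => /eqP; rewrite psumr_eq0 => [/allP H|j _]; last by rewrite -expr2 sqr_ge0.
apply/rowP => j; rewrite mxE; apply/eqP; rewrite -sqrf_eq0 expr2.
by apply: (H j); rewrite mem_index_enum.
Qed.

Lemma nrm2D u v : nrm2 (u + v) = nrm2 u + 2 * dot u v + nrm2 v.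
Proof. by rewrite /nrm2 !dotDl !dotDr (dotC v u); ring. Qed.

Lemma nrm2Z a u : nrm2 (a *: u) = a ^+ 2 * nrm2 u.
Proof. by rewrite /nrm2 dotZl dotZr mulrA expr2. Qed.

Lemma nrm2_pyth u v : dot u v = 0 -> nrm2 (u + v) = nrm2 u + nrm2 v.
Proof. by move=> h; rewrite nrm2D h mulr0 addr0. Qed.

Lemma dot_le u v : 2 * dot u v <= nrm2 u + nrm2 v.
Proof.
have := nrm2_ge0 (u - v); rewrite nrm2D /nrm2 dotNr dotNl dotNr opprK.
lra.
Qed.

Lemma nrm2D_le u v : nrm2 (u + v) <= 2 * nrm2 u + 2 * nrm2 v.
Proof. rewrite nrm2D; have := dot_le u v; lra. Qed.

Lemma nrm2_sum n (v : 'I_n -> pt) :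
  nrm2 (\sum_i v i) <= n%:R * \sum_i nrm2 (v i).
Proof.
rewrite /nrm2 dot_suml.
have H : forall i, dot (v i) (\sum_j v j) = \sum_j dot (v i) (v j)
  by move=> i; rewrite dot_sumr.
rewrite (eq_bigr _ (fun i _ => H i)).
have E : \sum_i \sum_j (2 * dot (v i) (v j)) <= \sum_i \sum_j (nrm2 (v i) + nrm2 (v j)).
  by apply: ler_sum => i _; apply: ler_sum => j _; apply: dot_le.
have L : \sum_i \sum_j (2 * dot (v i) (v j)) = 2 * \sum_i \sum_j dot (v i) (v j).
  by rewrite mulr_sumr; apply: eq_bigr => i _; rewrite mulr_sumr.
have E2 : \sum_i \sum_j (nrm2 (v i) + nrm2 (v j)) = 2 * (n%:R * \sum_i nrm2 (v i)).
  rewrite (eq_bigr (fun i => n%:R * nrm2 (v i) + \sum_j nrm2 (v j))); last first.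
    by move=> i _; rewrite big_split /= sumr_const card_ord mulr_natl.
  by rewrite big_split /= sumr_const card_ord -mulr_sumr mulr_natl; ring.
rewrite L E2 in E; rewrite /nrm2 in E; lra.
Qed.

Definition GB n (B : 'M[R]_(n, d)) : R := \det (B *m B^T).
Definition Pi n (B : 'M[R]_(n, d)) : 'M[R]_d := 1%:M - B^T *m invmx (B *m B^T) *m B.
Definition res n (B : 'M[R]_(n, d)) (x : pt) : pt := x *m Pi B.
Definition dist2 n (B : 'M[R]_(n, d)) (x : pt) : R := nrm2 (res B x).

Lemma unit_GB n (B : 'M[R]_(n, d)) : GB B != 0 -> B *m B^T \in unitmx.
Proof. by rewrite unitmxE unitfE. Qed.

Lemma res_orth n (B : 'M[R]_(n, d)) x : GB B != 0 -> res B x *m B^T = 0.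
Proof.
move=> /unit_GB U; rewrite /res /Pi mulmxBr mulmx1 mulmxBl -!mulmxA.
by rewrite mulVmx // mulmx1 subrr.
Qed.

Lemma dot_res_span n (B : 'M[R]_(n, d)) x y : GB B != 0 -> (y <= B)%MS ->
  dot (res B x) y = 0.
Proof.
move=> h /submxP [z ->]; rewrite /dot trmx_mul mulmxA res_orth // mul0mx.
by rewrite mxE.
Qed.

Lemma res_span n (B : 'M[R]_(n, d)) y : GB B != 0 -> (y <= B)%MS -> res B y = 0.
Proof.
move=> /unit_GB U /submxP [z ->]; rewrite /res /Pi mulmxBr mulmx1 -!mulmxA.
by rewrite (mulmxA B) (mulmxA (B *m B^T)) mulmxV // mul1mx subrr.
Qed.

Lemma sub_res_span n (B : 'M[R]_(n, d)) x : (x - res B x <= B)%MS.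
Proof.
rewrite /res /Pi mulmxBr mulmx1 opprB addrC subrK.
by rewrite mulmxA submxMl.
Qed.

Lemma dist_min n (B : 'M[R]_(n, d)) x y : GB B != 0 -> (y <= B)%MS ->
  dist2 B x <= nrm2 (x - y).
Proof.
move=> h hy.
have -> : x - y = res B x + ((x - res B x) - y) by rewrite addrA (addrC (res B x)) subrK.
rewrite nrm2_pyth /dist2; first by rewrite lerDl nrm2_ge0.
by apply: dot_res_span => //; rewrite addmx_sub ?eqmx_opp ?sub_res_span.
Qed.

Lemma dist2_ge0 n (B : 'M[R]_(n, d)) x : 0 <= dist2 B x.
Proof. exact: nrm2_ge0. Qed.

Lemma GB_cons n (B : 'M[R]_(n, d)) (x : pt) : GB B != 0 ->
  GB (col_mx x B) = GB B * dist2 B x.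
Proof.
move=> h.
set a := x *m B^T *m invmx (B *m B^T).
set r := res B x.
have ex : x = r + a *m B by rewrite /r /res /Pi mulmxBr mulmx1 !mulmxA subrK.
have E : col_mx x B = block_mx 1%:M a 0 1%:M *m col_mx r B.
  by rewrite mul_block_col !mul1mx mul0mx add0r -ex.
have rB : r *m B^T = 0 by apply: res_orth.
have Br : B *m r^T = 0 by rewrite -(trmxK B) -trmx_mul rB trmx0.
rewrite /GB E trmx_mul !mulmxA -(mulmxA _ (col_mx r B)) !det_mulmx det_tr det_ublock !det1 !mul1r mulr1.
rewrite tr_col_mx mul_col_row rB Br det_ublock det_mx11 mulrC.
by [].
Qed.

Lemma GB_cons0 n (B : 'M[R]_(n, d)) (x : pt) : GB B = 0 -> GB (col_mx x B) = 0.
Proof.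
move=> /eqP /det0P [v v0 hv]; apply/eqP/det0P.
have vB : v *m B = 0.
  apply: nrm2_eq0; rewrite /nrm2 /dot trmx_mul mulmxA -(mulmxA v) hv mul0mx.
  by rewrite mxE.
exists (row_mx 0 v); first by apply: contra v0 => /eqP; rewrite -row_mx0 => /eq_row_mx [_ ->].
by rewrite tr_col_mx mulmxA mul_row_col mul0mx add0r vB mul0mx.
Qed.

Definition Ms (s : seq pt) : 'M[R]_(size s, d) :=
  \matrix_(i < size s, j < d) (nth 0 s i) 0 j.
Definition Gs (s : seq pt) : R := GB (Ms s).

Lemma gramdetE (S : {fset pt}) : gramdet S = Gs (enum_fset S).
Proof. by []. Qed.

Lemma Ms_cons x s : Ms (x :: s) = col_mx x (Ms s).
Proof.
apply/matrixP => i j; rewrite !mxE; case: splitP => k hk.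
  by rewrite (ord1 k) in hk *; rewrite hk.
by rewrite hk mxE.
Qed.

Lemma Gs_cons x s : Gs (x :: s) = Gs s * dist2 (Ms s) x.
Proof.
rewrite /Gs Ms_cons; have [h|h] := eqVneq (GB (Ms s)) 0.
  by rewrite GB_cons0 // h mul0r.
exact: GB_cons.
Qed.

Lemma Gs_ge0 s : 0 <= Gs s.
Proof.
elim: s => [|x s IH]; first by rewrite /Gs /GB det_mx00.
by rewrite Gs_cons mulr_ge0 // dist2_ge0.
Qed.

Definition ND n (f : 'I_n -> pt) : R := GB (\matrix_(i < n, j < d) f i 0 j).

Lemma ND_perm n (f : 'I_n -> pt) (p : 'S_n) : ND (fun i => f (p i)) = ND f.
Proof.
rewrite /ND.
have -> : \matrix_(i < n, j < d) f (p i) 0 j = row_perm p (\matrix_(i < n, j < d) f i 0 j).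
  by apply/matrixP => i j; rewrite !mxE.
rewrite /GB row_permE trmx_mul mulmxA -(mulmxA (perm_mx p)) !det_mulmx det_tr det_perm.
by rewrite mulrC mulrA -expr2 sqrr_sign mul1r.
Qed.

Lemma Ms_ND s n (f : 'I_n -> pt) : size s = n -> (forall i : 'I_n, nth 0 s i = f i) ->
  Gs s = ND f.
Proof.
move=> hs; subst n => hf; rewrite /Gs /ND /Ms; congr GB.
by apply/matrixP => i j; rewrite !mxE hf.
Qed.

Lemma Gs_perm s t : perm_eq s t -> Gs s = Gs t.
Proof.
move=> hst; have hsz := perm_size hst.
have /perm.tuple_permP [p Ep] : perm_eq s (in_tuple t) by [].
rewrite (@Ms_ND s (size t) (fun i => tnth (in_tuple t) (p i))) //; last first.
  by move=> i; rewrite Ep nth_mktuple.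
rewrite (ND_perm (fun i => tnth (in_tuple t) i)).
by symmetry; apply: Ms_ND => // i; rewrite (tnth_nth 0).
Qed.

Lemma row_Ms s (i : 'I_(size s)) : row i (Ms s) = nth 0 s i.
Proof. by apply/rowP => j; rewrite !mxE. Qed.

Lemma mem_span s y : y \in s -> (y <= Ms s)%MS.
Proof.
move=> hy; have hi : (index y s < size s)%N by rewrite index_mem.
by apply: (eq_row_sub (Ordinal hi)); rewrite row_Ms nth_index.
Qed.

Lemma sub_span s1 s2 : {subset s1 <= s2} -> (Ms s1 <= Ms s2)%MS.
Proof. by move=> h; apply/row_subP => i; rewrite row_Ms; apply/mem_span/h/mem_nth. Qed.

Lemma span_rem (c : seq pt) (u : 'rV_(size c)) (j : 'I_(size c)) : uniq c ->
  (u *m Ms c - u 0 j *: nth 0 c j <= Ms (rem (nth 0 c j) c))%MS.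
Proof.
move=> uc; rewrite mulmx_sum_row (bigD1 j) //= row_Ms addrAC subrr add0r.
apply: summx_sub => i hij; apply: scalemx_sub; rewrite row_Ms; apply: mem_span.
rewrite rem_filter // mem_filter /= mem_nth // andbT.
by rewrite nth_uniq //; apply: contra hij => /eqP hv; apply/eqP/val_inj.
Qed.

Lemma exists_max n (F : 'I_n -> R) : (0 < n)%N -> exists j, forall i, F i <= F j.
Proof.
move=> n0; pose i0 := Ordinal n0.
case: (@arg_maxP _ R _ i0 predT F) => // j _ hj.
by exists j => i; apply: hj.
Qed.

Lemma res_mul n m (B : 'M[R]_(n, d)) (u : 'rV_m) (C : 'M[R]_(m, d)) :
  res B (u *m C) = \sum_i u 0 i *: res B (row i C).
Proof.
rewrite /res -mulmxA mulmx_sum_row; apply: eq_bigr => i _.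
by rewrite row_mul.
Qed.

Lemma zmod_id (V : zmodType) (x y w : V) : x - (y - (w - x)) = w - y.
Proof. by rewrite opprB addrA (addrC x) subrK. Qed.

Lemma sub_opp m1 m2 (A : 'M[R]_(m1, d)) (B : 'M[R]_(m2, d)) :
  (A <= B)%MS -> (- A <= B)%MS.
Proof. by move=> h; rewrite -scaleN1r scalemx_sub. Qed.

Lemma sub_subr m1 m2 (A C : 'M[R]_(m1, d)) (B : 'M[R]_(m2, d)) :
  (A <= B)%MS -> (C <= B)%MS -> (A - C <= B)%MS.
Proof. by move=> h1 h2; rewrite addmx_sub // sub_opp. Qed.

Lemma pos_split (x y : R) : 0 <= x -> 0 <= y -> 0 < x * y -> 0 < x /\ 0 < y.
Proof.
move=> hx hy hxy; split; rewrite lt_def ?hx ?hy andbT; apply/eqP => h;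
  by move: hxy; rewrite h ?mul0r ?mulr0 ltxx.
Qed.

Lemma core (c t : seq pt) (q : pt) (L : R) :
  uniq c -> 0 < Gs c -> 0 < Gs t -> (size t < size c)%N -> 0 <= L ->
  (forall j : 'I_(size c), Gs (q :: rem (nth 0 c j) c) <= L * Gs c) ->
  exists j : 'I_(size c),
    Gs (q :: t) <= 4 * L * (size c)%:R ^+ 2 * Gs (nth 0 c j :: t).
Proof.
move=> uc Gc Gt szt L0 hyp.
set n := size c in hyp szt *.
set B := Ms c; set Bt := Ms t.
have GBc : GB B != 0 by rewrite gt_eqF.
have GBt : GB Bt != 0 by rewrite gt_eqF.
pose sj (j : 'I_n) := rem (nth 0 c j) c.
pose h (j : 'I_n) := dist2 (Ms (sj j)) (nth 0 c j).
have cperm j : Gs c = Gs (sj j) * h j.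
  by rewrite -Gs_cons; apply: Gs_perm; apply: perm_to_rem; apply: mem_nth.
have sjpos j : 0 < Gs (sj j) /\ 0 < h j.
  by apply: pos_split; rewrite ?Gs_ge0 ?dist2_ge0 // -cperm.
have hq j : dist2 (Ms (sj j)) q <= L * h j.
  have := hyp j; rewrite Gs_cons (cperm j) mulrCA ler_pM2l //.
  by case: (sjpos j).
pose a := q *m B^T *m invmx (B *m B^T).
pose r := res B q.
have qE : q = r + a *m B by rewrite /r /res /Pi mulmxBr mulmx1 !mulmxA subrK.
have S3 j : nrm2 r + (a 0 j) ^+ 2 * h j <= dist2 (Ms (sj j)) q.
  set S := Ms (sj j).
  have GBs : GB S != 0 by case: (sjpos j) => /gt_eqF -> _.
  have SB : (S <= B)%MS by apply: sub_span => x; apply: mem_rem.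
  set y := q - res S q.
  have hy : (y <= S)%MS by apply: sub_res_span.
  have -> : dist2 S q = nrm2 (q - y) by rewrite /dist2 /y opprB addrC subrK.
  have -> : q - y = r + (a *m B - y) by rewrite addrA -qE.
  rewrite nrm2_pyth; last first.
    by apply: dot_res_span => //; apply: sub_subr; rewrite ?submxMl ?(submx_trans hy).
  rewrite lerD2l.
  set z := y - (a *m B - a 0 j *: nth 0 c j).
  have hz : (z <= S)%MS by apply: sub_subr => //; apply: span_rem.
  have [aj0|aj0] := eqVneq (a 0 j) 0.
    by rewrite aj0 expr0n /= mul0r nrm2_ge0.
  have -> : a *m B - y = a 0 j *: (nth 0 c j - (a 0 j)^-1 *: z).
    by rewrite scalerBr scalerA divff // scale1r /z zmod_id.
  rewrite nrm2Z ler_wpM2l ?sqr_ge0 //.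
  by apply: dist_min => //; apply: scalemx_sub.
have nr j : nrm2 r <= L * h j.
  apply: le_trans (hq j); apply: le_trans (S3 j).
  by rewrite lerDl mulr_ge0 ?sqr_ge0 ?dist2_ge0.
have na j : (a 0 j) ^+ 2 <= L.
  case: (sjpos j) => _ hj.
  rewrite -(ler_pM2r hj); apply: le_trans (hq j); apply: le_trans (S3 j).
  by rewrite lerDr nrm2_ge0.
pose e (i : 'I_n) := res Bt (nth 0 c i).
have [lam [lam0 hlam]] : exists lam : 'rV[R]_n, lam != 0 /\ lam *m (B *m Bt^T) = 0.
  set A := B *m Bt^T; set K := kermx A.
  have rK : (0 < \rank K)%N.
    rewrite /K mxrank_ker subn_gt0; apply: leq_ltn_trans szt; exact: rank_leq_col.
  case: (pickP (fun i => row i K != 0)) => [i hi | hn].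
    by exists (row i K); split => //; rewrite -row_mul mulmx_ker row0.
  have K0 : K = 0.
    by apply/row_matrixP => i; rewrite row0; apply/eqP; move: (hn i) => /= /negbFE.
  by move: rK; rewrite K0 mxrank0.
pose w := lam *m B.
have hw : w *m Bt^T = 0 by rewrite /w -mulmxA.
have wres : res Bt w = w.
  by rewrite /res /Pi mulmxBr mulmx1 !mulmxA hw !mul0mx subr0.
have wsum : w = \sum_i lam 0 i *: e i.
  by rewrite -{1}wres /w res_mul; apply: eq_bigr => i _; rewrite row_Ms.
have n0 : (0 < n)%N by apply: leq_ltn_trans szt.
have [j0 hj0] := exists_max (fun i => `|lam 0 i|) n0.
have [j1 hj1] := exists_max (fun i => nrm2 (e i)) n0.
set D := nrm2 (e j1).
have D0 : 0 <= D by apply: nrm2_ge0.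
have l0 : lam 0 j0 != 0.
  apply: contra lam0 => /eqP l0; apply/eqP/rowP => i; rewrite mxE.
  by apply/eqP; rewrite -normr_le0; apply: le_trans (hj0 i) _; rewrite l0 normr0.
have hh0 : h j0 <= n%:R ^+ 2 * D.
  set z := - ((lam 0 j0)^-1 *: (w - lam 0 j0 *: nth 0 c j0)).
  have hz : (z <= Ms (sj j0))%MS by apply: sub_opp; apply: scalemx_sub; apply: span_rem.
  have GBs : GB (Ms (sj j0)) != 0 by case: (sjpos j0) => /gt_eqF ->.
  apply: le_trans (@dist_min _ _ (nth 0 c j0) _ GBs hz) _.
  have -> : nth 0 c j0 - z = \sum_i (lam 0 i / lam 0 j0) *: e i.
    rewrite /z opprK scalerBr scalerA mulVf // scale1r addrC subrK wsum scaler_sumr.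
    by apply: eq_bigr => i _; rewrite scalerA mulrC.
  apply: le_trans (nrm2_sum _) _.
  have sc : \sum_(i < n) D = n%:R * D by rewrite sumr_const card_ord mulr_natl.
  rewrite expr2 -mulrA ler_wpM2l // -sc.
  apply: ler_sum => i _; rewrite nrm2Z -[X in _ <= X]mul1r.
  apply: ler_pM; rewrite ?sqr_ge0 ?nrm2_ge0 ?hj1 //.
  rewrite -real_normK ?num_real // expr_le1 // normrM normfV.
  by rewrite ler_pdivrMr ?normr_gt0 // mul1r hj0.
have main : dist2 Bt q <= 4 * L * n%:R ^+ 2 * D.
  have rq : res Bt q = res Bt r + res Bt (a *m B) by rewrite {1}qE /res mulmxDl.
  rewrite res_mul in rq.
  have X1 : nrm2 (res Bt r) <= L * (n%:R ^+ 2 * D).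
    have := @dist_min _ Bt r 0 GBt (sub0mx _ _); rewrite subr0 => h1.
    apply: le_trans h1 _; apply: le_trans (nr j0) _.
    by rewrite ler_wpM2l.
  have X2 : nrm2 (\sum_i a 0 i *: res Bt (row i B)) <= n%:R ^+ 2 * (L * D).
    apply: le_trans (nrm2_sum _) _.
    have sc : \sum_(i < n) (L * D) = n%:R * (L * D) by rewrite sumr_const card_ord mulr_natl.
    rewrite expr2 -mulrA ler_wpM2l // -sc.
    apply: ler_sum => i _; rewrite nrm2Z row_Ms; apply: ler_pM; rewrite ?sqr_ge0 ?nrm2_ge0 ?na //.
    exact: hj1.
  rewrite /dist2 rq; apply: le_trans (nrm2D_le _ _) _.
  nra.
exists j1; rewrite (Gs_cons q) (Gs_cons (nth 0 c j1)).
apply: le_trans (ler_wpM2l (Gs_ge0 t) main) _.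
rewrite le_eqVlt; apply/orP; left; apply/eqP; rewrite /D /e /dist2 /Bt; ring.
Qed.

Local Open Scope fset_scope.

Lemma gram_ge0 (S : {fset pt}) : 0 <= gramdet S.
Proof. exact: Gs_ge0. Qed.

Lemma gram_cons (S : {fset pt}) x : x \notin S -> gramdet (x |` S) = Gs (x :: enum_fset S).
Proof.
move=> hx; rewrite gramdetE; apply: Gs_perm; apply: uniq_perm.
- exact: fset_uniq.
- by rewrite /= hx fset_uniq.
- by move=> y; rewrite in_cons -in_fset1U.
Qed.

Lemma gram_rem (S : {fset pt}) p : p \in S -> gramdet S = Gs (p :: enum_fset (S `\ p)).
Proof. by move=> hp; rewrite -{1}(fsetD1K hp) gram_cons // fsetD11. Qed.

Lemma gram_swap (C : {fset pt}) q p : q \notin C -> p \in C ->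
  gramdet (swap C q p) = Gs (q :: rem p (enum_fset C)).
Proof.
move=> hq hp; rewrite /swap gram_cons; last by rewrite in_fsetD1 negb_and hq orbT.
apply: Gs_perm; rewrite perm_cons; apply: uniq_perm.
- exact: fset_uniq.
- by rewrite rem_uniq // fset_uniq.
- by move=> y; rewrite rem_filter ?fset_uniq // mem_filter /= -in_fsetD1.
Qed.

Lemma greedy_inv (P : {fset pt}) n C : greedy_reach P n C ->
  C `<=` P /\ (#|` C| = n \/ (C = P /\ (#|` C| <= n)%N)).
Proof.
elim: n C => [|n IH] C /=.
  by move=> ->; split; [exact: fsub0set | left; rewrite cardfs0].
move=> [C0 [h0 hs]]; have [sub0 hc0] := IH C0 h0.
case: hs => [[p hp [-> _]] | [hD ->]].
  move: hp; rewrite in_fsetD => /andP [pC0 pP].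
  split.
    by apply/fsubsetP => y; rewrite in_fset1U => /orP [/eqP -> // | /(fsubsetP sub0)].
  case: hc0 => [hc | [e _]]; first by left; rewrite cardfsU1 pC0 hc.
  by move: pC0; rewrite e pP.
have PC : P `<=` C0 by rewrite -fsetD_eq0 hD.
have e : C0 = P by apply/eqP; rewrite eqEfsubset sub0 PC.
split => //; right; split => //.
by case: hc0 => [-> | [_ h]] //; apply: leq_trans h _.
Qed.

Definition Inv (k : nat) (P C : {fset pt}) :=
  C `<=` P /\ (#|` C| = k \/ (C = P /\ (#|` C| <= k)%N)).

Lemma swap_inv eps k (P C1 C2 : {fset pt}) : swap_reach eps P C1 C2 -> Inv k P C1 -> Inv k P C2.
Proof.
elim => // {}C1 C2' C3 [q [p [hq hp -> _]]] _ IH [sub hc]; apply: IH.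
move: hq; rewrite in_fsetD => /andP [qC qP].
split.
  apply/fsubsetP => y; rewrite in_fset1U in_fsetD1 => /orP [/eqP -> // | /andP [_ /(fsubsetP sub)] //].
case: hc => [hc | [e _]]; last by move: qC; rewrite e qP.
left; rewrite cardfsU1 in_fsetD1 negb_and qC orbT /=.
by move: hc; rewrite (cardfsD1 p) hp.
Qed.

Lemma LS_struct eps k (P C : {fset pt}) : 0 < eps -> (0 < k)%N -> LS_output eps k P C ->
  [/\ C `<=` P, (#|` C| <= k)%N &
   (C = P \/ [/\ #|` C| = k, 0 < gramdet C &
     forall q p, q \in P `\` C -> p \in C -> gramdet (swap C q p) <= ((1 + eps) ^+ 2 * gramdet C)%R])].
Proof.
move=> e0 k0 [C0 hg [hs hterm]].
have [sub0 hc0] := greedy_inv hg.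
have [sub hc] := swap_inv hs (conj sub0 hc0).
case: hc => [hc | [e hc]]; last by split => //; left.
split => //; first by rewrite hc.
have [e|ne] := eqVneq C P; first by left.
right.
have [q hq] : exists q, q \in P `\` C.
  apply/fset0Pn; apply: contra ne => /eqP hD; rewrite eqEfsubset sub /=.
  by rewrite -fsetD_eq0 hD.
have [p hp] : exists p, p \in C.
  apply/fset0Pn; apply/eqP => C0e; move: hc; rewrite C0e cardfs0 => h.
  by rewrite -h in k0.
have e1 : (0 < 1 + eps)%R by rewrite addr_gt0.
have VC : 0 < VOL C.
  have := hterm q p hq hp; have := sqrtr_ge0 (gramdet (swap C q p)).
  rewrite /VOL => h1 h2; have := le_lt_trans h1 h2.
  by rewrite pmulr_rgt0.
split => //; first by move: VC; rewrite /VOL sqrtr_gt0.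
move=> q' p' hq' hp'.
have h := hterm q' p' hq' hp'.
have h2 := ltr_pM (sqrtr_ge0 _) (sqrtr_ge0 _) h h.
move: h2; rewrite -!expr2 /VOL sqr_sqrtr ?gram_ge0 // exprMn sqr_sqrtr ?gram_ge0 //.
exact: ltW.
Qed.

Lemma bigmax_ge (T : eqType) (r : seq T) (Pr : pred T) (F : T -> R) x :
  x \in r -> Pr x -> F x <= \big[Num.max/0%R]_(i <- r | Pr i) F i.
Proof.
elim: r => // y r IH; rewrite inE big_cons => /orP [/eqP <- Px | xr Px].
  by rewrite Px le_max lexx.
by case: (Pr y); rewrite ?le_max (IH xr Px) ?orbT.
Qed.

Lemma bigmax_ge0 (T : eqType) (r : seq T) (Pr : pred T) (F : T -> R) :
  0 <= \big[Num.max/0%R]_(i <- r | Pr i) F i.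
Proof. by elim/big_rec: _ => // i x _ h; rewrite le_max h orbT. Qed.

Lemma bigmax_att (T : eqType) (r : seq T) (Pr : pred T) (F : T -> R) :
  \big[Num.max/0%R]_(i <- r | Pr i) F i <= 0 \/
  exists2 x, x \in r & Pr x /\ \big[Num.max/0%R]_(i <- r | Pr i) F i = F x.
Proof.
elim: r => [|y r IH]; first by left; rewrite big_nil.
rewrite big_cons; case Py: (Pr y); last first.
  case: IH => [h|[x xr hx]]; first by left.
  by right; exists x => //; rewrite inE xr orbT.
rewrite maxEle; case: ifP => _.
  case: IH => [h|[x xr hx]]; first by left.
  by right; exists x => //; rewrite inE xr orbT.
by right; exists y; rewrite ?inE ?eqxx.
Qed.

Lemma MAXDET_ge k (P S : {fset pt}) : S `<=` P -> #|` S| = k -> gramdet S <= MAXDET k P.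
Proof.
move=> hS hk; rewrite /MAXDET; apply: bigmax_ge.
  by rewrite fpowersetE.
by rewrite /= hk.
Qed.

Lemma MAXDET_ge0 k (P : {fset pt}) : 0 <= MAXDET k P.
Proof. exact: bigmax_ge0. Qed.

Lemma MAXDET_att k (P : {fset pt}) : MAXDET k P <= 0 \/
  exists S : {fset pt}, [/\ S `<=` P, #|` S| = k & MAXDET k P = gramdet S].
Proof.
case: (bigmax_att (fpowerset P) (fun S : {fset pt} => #|` S| == k) (@gramdet R d)) => [h|[S hS [hk he]]].
  by left.
by right; exists S; split => //; [rewrite -fpowersetE | apply/eqP].
Qed.

Lemma mem_bigU m (F : 'I_m -> {fset pt}) x :
  reflect (exists i, x \in F i) (x \in \bigcup_(i <- enum 'I_m) F i).
Proof.
apply: (iffP (bigfcupP _ _ _ _)) => [[i _ h]|[i h]]; first by exists i.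
by exists i => //; rewrite mem_enum.
Qed.

Lemma exch eps k m (Ps Cs : 'I_m -> {fset pt}) : 0 < eps -> (0 < k)%N ->
  (forall i, LS_output eps k (Ps i) (Cs i)) ->
  forall n (T : {fset pt}), T `<=` \bigcup_(i <- enum 'I_m) Ps i -> #|` T| = k ->
   (#|` T `\` \bigcup_(i <- enum 'I_m) Cs i| <= n)%N -> 0 < gramdet T ->
   gramdet T <= ((4 * (1 + eps) ^+ 2 * k%:R ^+ 2) ^+ n * MAXDET k (\bigcup_(i <- enum 'I_m) Cs i))%R.
Proof.
move=> e0 k0 hLS.
set U := \bigcup_(i <- enum 'I_m) Cs i; set PU := \bigcup_(i <- enum 'I_m) Ps i.
set L := ((1 + eps) ^+ 2)%R.
set K := (4 * L * k%:R ^+ 2)%R.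
have L1 : (1 <= L)%R by rewrite exprn_ege1 // lerDl ltW.
have K1 : (1 <= K)%R.
  have h4 : (1 <= 4 :> R)%R by lra.
  apply: mulr_ege1; first exact: mulr_ege1.
  by apply: exprn_ege1; rewrite ler1n.
have K0 : (0 <= K)%R by apply: le_trans K1.
elim=> [|n IH] T hT hk hn hG.
  move: hn; rewrite leqn0 cardfs_eq0 fsetD_eq0 => hTU.
  by rewrite expr0 mul1r; apply: MAXDET_ge.
case: (leqP #|` T `\` U| n) => [hn'|hn'].
  apply: le_trans (IH T hT hk hn' hG) _.
  by rewrite exprS -mulrA ler_peMl // mulr_ge0 ?exprn_ge0 ?MAXDET_ge0.
have [s hs] : exists s, s \in T `\` U.
  by apply/fset0Pn; rewrite -cardfs_eq0 -lt0n; apply: leq_ltn_trans hn'.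
move: hs; rewrite in_fsetD => /andP [sU sT].
have [i si] : exists i, s \in Ps i by apply/mem_bigU; apply: (fsubsetP hT).
have sC : s \notin Cs i by apply: contra sU => h; apply/mem_bigU; exists i.
have [subC hcard [eCP | [hck hGC hloc]]] := LS_struct e0 k0 (hLS i).
  by move: sC; rewrite eCP si.
set T' := T `\ s; set t := enum_fset T'.
have hGT : gramdet T = Gs (s :: t) by apply: gram_rem.
have Gt : 0 < Gs t.
  by case: (pos_split (Gs_ge0 t) (dist2_ge0 (Ms t) s)) => //; rewrite -Gs_cons -hGT.
set c := enum_fset (Cs i).
have szt : (size t < size c)%N.
  rewrite hck; move: hk; rewrite (cardfsD1 s) sT => <-; exact: ltnSn.
have hyp : forall j : 'I_(size c), Gs (s :: rem (nth 0 c j) c) <= L * Gs c.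
  move=> j; rewrite -gram_swap //; last by apply: mem_nth.
  by apply: hloc; [rewrite in_fsetD sC si | apply: mem_nth].
have [j hj] := core (fset_uniq _) hGC Gt szt (le_trans ler01 L1) hyp.
have ek : ((size c)%:R = k%:R :> R)%R by rewrite hck.
rewrite ek -/K in hj.
set x := nth 0 c j in hj.
have xC : x \in Cs i by apply: mem_nth.
have Gx : 0 < Gs (x :: t).
  case: (pos_split K0 (Gs_ge0 (x :: t)) _) => //.
  by apply: lt_le_trans hj; rewrite -hGT.
have xT' : x \notin T'.
  apply/negP => xT; move: Gx; rewrite Gs_cons /dist2 res_span.
  - by rewrite /nrm2 dot0l mulr0 ltxx.
  - by rewrite gt_eqF.
  - by apply: mem_span.
have hT2 : gramdet (x |` T') = Gs (x :: t) by apply: gram_cons.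
have T'T : T' `<=` T by apply: fsubD1set.
have := IH (x |` T'); rewrite hT2 => IH2.
rewrite hGT; apply: le_trans hj _.
rewrite exprS -mulrA ler_wpM2l //; apply: IH2 => //.
- apply/fsubsetP => y; rewrite in_fset1U => /orP [/eqP -> | yT].
    by apply/mem_bigU; exists i; apply: (fsubsetP subC).
  by apply: (fsubsetP hT); apply: (fsubsetP T'T).
- by rewrite cardfsU1 xT' /= -hk (cardfsD1 s T) sT.
- have sub2 : (x |` T') `\` U `<=` (T `\` U) `\ s.
    apply/fsubsetP => y; rewrite (in_fsetD1 (T `\` U)) !in_fsetD in_fset1U /T' in_fsetD1.
    move=> /andP [yU /orP [/eqP ey | /andP [ys yT]]].
      by move: yU; rewrite ey => /negP; case; apply/mem_bigU; exists i.
    by rewrite ys yU yT.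
  apply: leq_trans (fsubset_leq_card sub2) _.
  by move: hn; rewrite (cardfsD1 s (T `\` U)) in_fsetD sU sT.
Qed.

End Gram.

Unset Implicit Arguments.

Local Open Scope fset_scope.

Theorem theorem1p2 (R : realType) (eps : R) :
  0 < eps ->
  exists A : R, 0 < A /\
    forall k d : nat, (1 <= k <= d)%N ->
      (forall P C : {fset 'rV[R]_d}, LS_output eps k P C -> (#|` C| <= k)%N) /\
      (forall (m : nat) (Ps Cs : 'I_m -> {fset 'rV[R]_d}),
         (1 <= m)%N ->
         (forall i, LS_output eps k (Ps i) (Cs i)) ->
         MAXDET k (\bigcup_(i <- enum 'I_m) Cs i)
           >= MAXDET k (\bigcup_(i <- enum 'I_m) Ps i) / (A * k%:R) ^+ (2 * k)).
Proof.
move=> e0; exists (2 * (1 + eps))%R; split; first by rewrite mulr_gt0 // addr_gt0.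
move=> k d /andP [k1 kd]; split.
  by move=> P C h; case: (LS_struct e0 k1 h).
move=> m Ps Cs m1 hLS.
set U := \bigcup_(i <- enum 'I_m) Cs i; set PU := \bigcup_(i <- enum 'I_m) Ps i.
have Kpos : (0 < (2 * (1 + eps) * k%:R) ^+ (2 * k))%R.
  by rewrite exprn_gt0 // !mulr_gt0 ?addr_gt0 ?ltr0n.
have eK : ((2 * (1 + eps) * k%:R) ^+ (2 * k) = (4 * (1 + eps) ^+ 2 * k%:R ^+ 2) ^+ k)%R.
  by rewrite exprM; congr (_ ^+ _); ring.
have Ug : (0 <= MAXDET k U * (2 * (1 + eps) * k%:R) ^+ (2 * k))%R.
  by rewrite mulr_ge0 ?MAXDET_ge0 ?ltW.
rewrite ler_pdivrMr //.
case: (MAXDET_att k PU) => [h | [S [hS hk he]]]; first exact: le_trans h Ug.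
rewrite he; case: (leP (gramdet S) 0%R) => [h|hpos]; first exact: le_trans h Ug.
have := @exch R d eps k m Ps Cs e0 k1 hLS k S hS hk _ hpos.
rewrite -/U mulrC eK; apply.
by apply: leq_trans (fsubset_leq_card (fsubsetDl _ _)) _; rewrite hk.
Qed.
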